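(* Let $\mathcal{X}=\sum_{k=1}^r\beta_k\bigcirc_{\ell=1}^d\mathbf{y}^{(\ell)}_k$ and $\mathcal{Y}=\sum_{k=1}^r\alpha_k\bigcirc_{\ell=1}^d\mathbf{y}^{(\ell)}_k$ be tensors in $\mathbb{C}^{n_1\times\cdots\times n_d}$ in standard form with the same unit vectors $\mathbf{y}^{(\ell)}_k$. Let $\epsilon\in(0,3/4]$ and for each $j\in[d]$ let $\mathbf{A}_j\in\mathbb{C}^{m_j\times n_j}$ be an $(\epsilon/4d)$-JL embedding into $\mathbb{C}^{m_j}$ of $$\mathcal{S}'_j:=\Big(\bigcup_{1\le h<k\le r}\{\mathbf{y}^{(j)}_k-\mathbf{y}^{(j)}_h,\ \mathbf{y}^{(j)}_k+\mathbf{y}^{(j)}_h,\ \mathbf{y}^{(j)}_k-\mathrm{i}\,\mathbf{y}^{(j)}_h,\ \mathbf{y}^{(j)}_k+\mathrm{i}\,\mathbf{y}^{(j)}_h\}\Big)\cup\{\mathbf{y}^{(j)}_k\}_{k\in[r]}.$$ Define $$\epsilon':=\begin{cases}\big(\epsilon+e\sqrt{r(r-1)}\,\epsilon^d\big)e & \text{if }\mu_{\mathcal{Y}}=0,\\ \epsilon\big(e+e^2\sqrt{r(r-1)}\max(\epsilon^{d-1},\mu_{\mathcal{Y}}^{d-1})\big)&\text{otherwise.}\end{cases}$$ Then, writing $\mathcal{Z}\times_{j=1}^d\mathbf{A}_j:=\mathcal{Z}\times_1\mathbf{A}_1\cdots\times_d\mathbf{A}_d$, $$\big|\langle\mathcal{X}\times_{j=1}^d\mathbf{A}_j,\mathcal{Y}\times_{j=1}^d\mathbf{A}_j\rangle-\langle\mathcal{X},\mathcal{Y}\rangle\big|\le2\epsilon'(\|\boldsymbol\beta\|_2^2+\|\boldsymbol\alpha\|_2^2)\le4\epsilon'\max\{\|\boldsymbol\beta\|_2^2,\|\boldsymbol\alpha\|_2^2\},$$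 and, if moreover $\mu'_{\mathcal{Y}}<(r-1)^{-1}$, the last quantity is at most $4\epsilon'\frac{\max\{\|\mathcal{X}\|^2,\|\mathcal{Y}\|^2\}}{1-(r-1)\mu'_{\mathcal{Y}}}$.
   Context: Tensors carry the inner product $\langle\mathcal{X},\mathcal{Y}\rangle=\sum\mathcal{X}_{i_1\dots i_d}\overline{\mathcal{Y}_{i_1\dots i_d}}$ and norm $\|\cdot\|$; $\bigcirc$ is the outer product; $(\mathcal{Z}\times_j\mathbf{U})_{i_1,\dots,\ell,\dots,i_d}=\sum_{i_j}\mathcal{Z}_{i_1,\dots,i_j,\dots,i_d}\mathbf{U}_{\ell,i_j}$; $\mathrm{i}$ is the imaginary unit, $e$ Euler's number. Standard form means $\|\mathbf{y}^{(\ell)}_k\|_2=1$ for all $\ell,k$. A matrix $\mathbf{A}$ is an $\epsilon$-JL embedding of $S$ if $\|\mathbf{A}x\|_2^2=(1+\epsilon_x)\|x\|_2^2$ with $\epsilon_x\in(-\epsilon,\epsilon)$ for all $x\in S$. Relative to the vectors $\mathbf{y}^{(\ell)}_k$: $\mu_{\mathcal{Y}}=\max_{\ell\in[d]}\max_{k\ne h}|\langle\mathbf{y}^{(\ell)}_k,\mathbf{y}^{(\ell)}_h\rangle|$ and $\mu'_{\mathcal{Y}}=\max_{k\ne h}\prod_{\ell=1}^d|\langle\mathbf{y}^{(\ell)}_k,\mathbf{y}^{(\ell)}_h\rangle|$. *)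

(* Defs.v *)
From HB Require Import structures.
From mathcomp Require Import all_boot all_order all_algebra.
From mathcomp Require Import complex.
From mathcomp Require Import reals sequences exp.
Set Implicit Arguments. Unset Strict Implicit. Unset Printing Implicit Defensive.
Import Order.TTheory GRing.Theory Num.Theory.
Local Open Scope ring_scope.
Local Open Scope complex_scope.

Section Defs.
Variable R : realType.
Local Notation C := R[i].

Definition re (z : C) : R := let: a +i* _ := z in a.
Definition cabs (z : C) : R := let: a +i* b := z in Num.sqrt (a ^+ 2 + b ^+ 2).

Definition vinner n (u v : 'cV[C]_n) : C := \sum_(i < n) u i 0 * (v i 0)^*.
Definition vnorm2 n (u : 'cV[C]_n) : R := \sum_(i < n) cabs (u i 0) ^+ 2.
Definition vnorm n (u : 'cV[C]_n) : R := Num.sqrt (vnorm2 u).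
Definition cnorm2 r (c : 'I_r -> C) : R := \sum_(k < r) cabs (c k) ^+ 2.

Definition Idx d (n : 'I_d -> nat) := {dffun forall j : 'I_d, 'I_(n j)}.
Definition tensor d (n : 'I_d -> nat) := Idx n -> C.

Definition outer d (n : 'I_d -> nat) (v : forall j : 'I_d, 'cV[C]_(n j)) : tensor n :=
  fun i => \prod_(j < d) v j (i j) 0.

Definition cp d (n : 'I_d -> nat) r (c : 'I_r -> C)
    (y : forall l : 'I_d, 'I_r -> 'cV[C]_(n l)) : tensor n :=
  fun i => \sum_(k < r) c k * outer (fun l => y l k) i.

Definition tinner d (n : 'I_d -> nat) (X Y : tensor n) : C :=
  \sum_(i : Idx n) X i * (Y i)^*.
Definition tnorm d (n : 'I_d -> nat) (X : tensor n) : R := Num.sqrt (re (tinner X X)).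

(* Z x_1 A_1 ... x_d A_d, written out: the composition of the mode products
   (Z x_j U)_{..l..} = sum_{i_j} Z_{..i_j..} U_{l,i_j} for j = 1..d *)
Definition mprod d (n m : 'I_d -> nat) (Z : tensor n)
    (A : forall j : 'I_d, 'M[C]_(m j, n j)) : tensor m :=
  fun l => \sum_(i : Idx n) Z i * \prod_(j < d) A j (l j) (i j).

Definition is_JL p q (eps : R) (A : 'M[C]_(p, q)) (S : 'cV[C]_q -> Prop) : Prop :=
  forall x, S x -> exists epsx : R,
    - eps < epsx < eps /\ vnorm2 (A *m x) = (1 + epsx) * vnorm2 x.

Definition Sprime q r (yj : 'I_r -> 'cV[C]_q) (x : 'cV[C]_q) : Prop :=
  (exists h k : 'I_r, (h < k)%N /\
     (x = yj k - yj h \/ x = yj k + yj h \/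
      x = yj k - 'i *: yj h \/ x = yj k + 'i *: yj h))
  \/ (exists k : 'I_r, x = yj k).

Definition standard_form d (n : 'I_d -> nat) r
    (y : forall l : 'I_d, 'I_r -> 'cV[C]_(n l)) : Prop :=
  forall l k, vnorm (y l k) = 1.

(* coherences mu_Y and mu'_Y (max over an empty range is 0) *)
Definition mu d (n : 'I_d -> nat) r (y : forall l : 'I_d, 'I_r -> 'cV[C]_(n l)) : R :=
  \big[Num.max/0]_(l < d) \big[Num.max/0]_(k < r) \big[Num.max/0]_(h < r | h != k)
     cabs (vinner (y l k) (y l h)).
Definition mu' d (n : 'I_d -> nat) r (y : forall l : 'I_d, 'I_r -> 'cV[C]_(n l)) : R :=
  \big[Num.max/0]_(k < r) \big[Num.max/0]_(h < r | h != k)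
     \prod_(l < d) cabs (vinner (y l k) (y l h)).

Definition eps' (eps muY : R) (d r : nat) : R :=
  let e := expR (1 : R) in
  let s := Num.sqrt ((r * (r - 1))%:R : R) in
  if muY == 0 then (eps + e * s * eps ^+ d) * e
  else eps * (e + e ^+ 2 * s * Num.max (eps ^+ (d - 1)) (muY ^+ (d - 1))).

End Defs.

(* Main.v *)
Require Import Defs.
From HB Require Import structures.
From mathcomp Require Import all_boot all_order all_algebra.
From mathcomp Require Import complex.
From mathcomp Require Import reals sequences exp.
From mathcomp Require Import ring lra.
Import Order.TTheory GRing.Theory Num.Theory.
Local Open Scope ring_scope.
Local Open Scope complex_scope.

Lemma distr_dep (R : comNzRingType) d (n : 'I_d -> nat) (F : forall j : 'I_d, 'I_(n j) -> R) :
  \sum_(i : Idx n) \prod_(j < d) F j (i j) = \prod_(j < d) \sum_(t : 'I_(n j)) F j t.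
Proof.
pose T_ : 'I_d -> finType := fun j => 'I_(n j).
pose P_ := fun j : 'I_d => [ffun t : T_ j => F j t].
transitivity (\prod_(j < d) \sum_(t : T_ j) P_ j t); last first.
  by apply: eq_bigr => j _; apply: eq_bigr => t _; rewrite ffunE.
rewrite (eq_bigr _ (fun j _ => big_tag (fun j (t : T_ j) => P_ j t) j)).
rewrite bigA_distr_big_dep -big_fprod.
rewrite (reindex (@dffun_of_fprod _ T_)); last exact/onW_bij/dffun_of_fprod_bij.
apply: eq_bigr => t _; apply: eq_bigr => j _.
by rewrite /P_ /dffun_of_fprod !ffunE.
Qed.

Set Implicit Arguments. Unset Strict Implicit.
Section S.
Variable R : realType.
Local Notation C := R[i].

Lemma mprod_cp d (n m : 'I_d -> nat) r (c : 'I_r -> C)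
    (y : forall l : 'I_d, 'I_r -> 'cV[C]_(n l)) (A : forall j : 'I_d, 'M[C]_(m j, n j)) l :
  mprod (cp c y) A l = cp c (fun j k => A j *m y j k) l.
Proof.
rewrite /mprod /cp /outer.
under eq_bigr do rewrite mulr_suml.
rewrite exchange_big /=; apply: eq_bigr => k _.
under eq_bigr do rewrite -mulrA -big_split /=.
rewrite -mulr_sumr (@distr_dep _ _ _ (fun j t => y j k t 0 * A j (l j) t)); congr (_ * _).
apply: eq_bigr => j _; rewrite mxE; apply: eq_bigr => t _.
by rewrite mulrC.
Qed.

Lemma tinner_cp d (n : 'I_d -> nat) r (b a : 'I_r -> C)
    (z : forall l : 'I_d, 'I_r -> 'cV[C]_(n l)) :
  tinner (cp b z) (cp a z) =
  \sum_(k < r) \sum_(h < r) b k * (a h)^* * \prod_(j < d) vinner (z j k) (z j h).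
Proof.
rewrite /tinner /cp /outer.
under eq_bigr => i _ do rewrite rmorph_sum mulr_suml; rewrite exchange_big /=.
apply: eq_bigr => k _.
under eq_bigr => i _ do rewrite mulr_sumr; rewrite exchange_big /=.
apply: eq_bigr => h _.
under eq_bigr => i _ do rewrite rmorphM rmorph_prod /= mulrACA -big_split /=.
rewrite -mulr_sumr (@distr_dep _ _ _ (fun j t => z j k t 0 * (z j h t 0)^*)); congr (_ * _).
Qed.

Lemma cabsE (z : C) : `|z| = (cabs z)%:C.
Proof. by case: z => a b; rewrite normc_def. Qed.

Lemma cabs_ge0 (z : C) : 0 <= cabs z.
Proof. by case: z => a b; rewrite /cabs sqrtr_ge0. Qed.

Lemma cabsM (z w : C) : cabs (z * w) = cabs z * cabs w.
Proof. by apply: complexI; rewrite rmorphM /= -!cabsE normrM. Qed.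

Lemma cabsD (z w : C) : cabs (z + w) <= cabs z + cabs w.
Proof. by rewrite -lecR rmorphD /= -!cabsE ler_normD. Qed.

Lemma cabsN (z : C) : cabs (- z) = cabs z.
Proof. by apply: complexI; rewrite -!cabsE normrN. Qed.

Lemma cabsB (z w : C) : cabs (z - w) <= cabs z + cabs w.
Proof. by rewrite (le_trans (cabsD _ _)) // cabsN. Qed.

Lemma cabsJ (z : C) : cabs (z^*) = cabs z.
Proof. by case: z => a b; rewrite /cabs /= sqrrN. Qed.

Lemma cabs_real (x : R) : cabs x%:C = `|x|.
Proof. by rewrite /cabs /= expr0n /= addr0 sqrtr_sqr. Qed.

Lemma cabs_i : cabs ('i : C) = 1.
Proof. by rewrite /cabs /= expr0n /= add0r expr1n sqrtr1. Qed.

Lemma cabs0 : cabs (0 : C) = 0.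
Proof. by rewrite -[0 : C]/((0:R)%:C) cabs_real normr0. Qed.

Lemma cabs1 : cabs (1 : C) = 1.
Proof. by rewrite -[1 : C]/((1:R)%:C) cabs_real normr1. Qed.

Lemma cabs_sum (I : Type) (s : seq I) (P : pred I) (F : I -> C) :
  cabs (\sum_(i <- s | P i) F i) <= \sum_(i <- s | P i) cabs (F i).
Proof.
apply: (big_rec2 (fun a b => cabs b <= a)); first by rewrite cabs0.
by move=> i a b _ H; apply: le_trans (cabsD _ _) _; rewrite lerD2l.
Qed.

Lemma cabs_prod (I : Type) (s : seq I) (P : pred I) (F : I -> C) :
  cabs (\prod_(i <- s | P i) F i) = \prod_(i <- s | P i) cabs (F i).
Proof.
apply: (big_rec2 (fun a b => cabs b = a)); first by rewrite cabs1.
by move=> i a b _ H; rewrite cabsM H.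
Qed.

Lemma mulJ (z : C) : z * z^* = (cabs z ^+ 2)%:C.
Proof.
case: z => a b; rewrite /cabs sqr_sqrtr ?addr_ge0 ?sqr_ge0 //=.
by rewrite /GRing.mul /= /mulc; congr (_ +i* _); rewrite /=; ring.
Qed.

Lemma re_add (z w : C) : re (z + w) = re z + re w.
Proof. by case: z; case: w. Qed.

Lemma re_ge (z : C) : - cabs z <= re z.
Proof.
case: z => a b; rewrite /cabs /= lerNl.
apply: (@le_trans _ _ `|a|); first by rewrite ler_normr lexx orbT. rewrite -sqrtr_sqr ler_sqrt ?addr_ge0 ?sqr_ge0 //.
by rewrite lerDl sqr_ge0.
Qed.

Lemma re_real (x : R) : re x%:C = x. Proof. by []. Qed.

Lemma rCD (x y : R) : (x + y)%:C = x%:C + y%:C :> C.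
Proof. by apply/eqP; rewrite eq_complex /= addr0 !eqxx. Qed.
Lemma rCM (x y : R) : (x * y)%:C = x%:C * y%:C :> C.
Proof. by apply/eqP; rewrite eq_complex /= !mulr0 !mul0r subr0 addr0 !eqxx. Qed.
Lemma rCN (x : R) : (- x)%:C = - x%:C :> C.
Proof. by apply/eqP; rewrite eq_complex /= oppr0 !eqxx. Qed.
Lemma rCB (x y : R) : (x - y)%:C = x%:C - y%:C :> C.
Proof. by rewrite rCD rCN. Qed.
Lemma rC1 : (1 : R)%:C = 1 :> C. Proof. by []. Qed.
Lemma rC0 : (0 : R)%:C = 0 :> C. Proof. by []. Qed.

Lemma rC_sum (I : Type) (s : seq I) (P : pred I) (F : I -> R) :
  (\sum_(i <- s | P i) F i)%:C = \sum_(i <- s | P i) (F i)%:C :> C.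
Proof. by apply: (big_morph (fun x : R => x%:C : C)) => [x y|]; rewrite ?rCD. Qed.

Lemma vnorm2_ge0 q (u : 'cV[C]_q) : 0 <= vnorm2 u.
Proof. by apply: sumr_ge0 => i _; rewrite sqr_ge0. Qed.

Lemma vinnerii q (u : 'cV[C]_q) : vinner u u = (vnorm2 u)%:C.
Proof. by rewrite /vinner /vnorm2 rC_sum; apply: eq_bigr => i _; rewrite mulJ. Qed.

Lemma vinnerC q (u v : 'cV[C]_q) : vinner u v = (vinner v u)^*.
Proof.
rewrite /vinner rmorph_sum /=; apply: eq_bigr => i _.
by rewrite rmorphM /= conjcK mulrC.
Qed.

Lemma conj_i : ('i : C)^* = - 'i.
Proof. by apply/eqP; rewrite eq_complex /= oppr0 !eqxx. Qed.

Lemma i2 : ('i : C) * 'i = -1.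
Proof. by rewrite -expr2 sqr_i. Qed.

Lemma polar_gen (a b ac bc i ic : C) : ic = - i -> i * i = -1 ->
  4 * (a * bc) = (a + b) * (ac + bc) - (a - b) * (ac - bc) +
  i * ((a + i * b) * (ac + ic * bc) - (a - i * b) * (ac - ic * bc)).
Proof.
move=> -> H; apply/eqP; rewrite -subr_eq0; apply/eqP.
transitivity (- (i * i + 1) * (2 * (b * ac) - 2 * (a * bc))); first by ring.
by rewrite H addNr oppr0 mul0r.
Qed.

Lemma sum4_gen (a b ac bc i ic : C) : ic = - i -> i * i = -1 ->
  (a + b) * (ac + bc) + (a - b) * (ac - bc) + (a + i * b) * (ac + ic * bc) + (a - i * b) * (ac - ic * bc)
  = 4 * (a * ac + b * bc).
Proof.
move=> -> H; apply/eqP; rewrite -subr_eq0; apply/eqP.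
transitivity (- 2 * (i * i + 1) * (b * bc)); first by ring.
by rewrite H addNr mulr0 mul0r.
Qed.

Lemma polar_pt (a b : C) :
  4 * (a * b^*) = ((a+b)*(a+b)^* - (a-b)*(a-b)^*)
     + 'i * ((a+'i*b)*(a+'i*b)^* - (a-'i*b)*(a-'i*b)^*).
Proof.
rewrite !rmorphD ?rmorphN !rmorphM; apply: polar_gen; last exact: i2.
by apply/eqP; rewrite eq_complex /= oppr0 !eqxx.
Qed.

Lemma sum4_pt (a b : C) :
  (a+b)*(a+b)^* + (a-b)*(a-b)^* + (a+'i*b)*(a+'i*b)^* + (a-'i*b)*(a-'i*b)^*
  = 4 * (a * a^* + b * b^*).
Proof.
rewrite !rmorphD ?rmorphN !rmorphM; apply: sum4_gen; last exact: i2.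
by apply/eqP; rewrite eq_complex /= oppr0 !eqxx.
Qed.

Lemma polar_v q (u v : 'cV[C]_q) : 4 * vinner u v =
  ((vnorm2 (u + v))%:C - (vnorm2 (u - v))%:C)
  + 'i * ((vnorm2 (u + 'i *: v))%:C - (vnorm2 (u - 'i *: v))%:C).
Proof.
rewrite -!vinnerii /vinner !mulr_sumr -!sumrB mulr_sumr -big_split /=.
by apply: eq_bigr => t _; rewrite !mxE polar_pt.
Qed.

Lemma sum4_v q (u v : 'cV[C]_q) :
  vnorm2 (u + v) + vnorm2 (u - v) + vnorm2 (u + 'i *: v) + vnorm2 (u - 'i *: v)
  = 4 * (vnorm2 u + vnorm2 v).
Proof.
apply: complexI; rewrite !rCD rCM rCD -!vinnerii /vinner -!big_split /= mulr_sumr.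
rewrite (_ : (4 : R)%:C = 4); last exact: (rmorph_nat (real_complex R) 4).
by apply: eq_bigr => t _; rewrite !mxE sum4_pt.
Qed.

Lemma cabs_nat n : cabs (n%:R : C) = n%:R.
Proof.
apply: complexI; rewrite -cabsE normr_nat; apply: esym.
exact: (rmorph_nat (real_complex R) n).
Qed.

Lemma JL_bound p q (A : 'M[C]_(p, q)) dl (S : 'cV[C]_q -> Prop) x :
  is_JL dl A S -> S x -> exists e, `|e| < dl /\ vnorm2 (A *m x) = (1 + e) * vnorm2 x.
Proof.
move=> H /H [e [/andP [h1 h2] h3]]; exists e; split => //.
by rewrite ltr_norml h1 h2.
Qed.

Lemma cabs_err (e N : R) dl : `|e| < dl -> 0 <= N -> cabs (e * N)%:C <= dl * N.
Proof.
move=> he hN; rewrite cabs_real normrM (ger0_norm hN).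
by rewrite ler_wpM2r // ltW.
Qed.

Lemma jl_pair p q (A : 'M[C]_(p, q)) dl (S : 'cV[C]_q -> Prop) x y :
  is_JL dl A S -> S (x + y) -> S (x - y) -> S (x + 'i *: y) -> S (x - 'i *: y) ->
  vnorm2 x = 1 -> vnorm2 y = 1 ->
  cabs (vinner (A *m x) (A *m y) - vinner x y) <= 2 * dl.
Proof.
move=> HJ S1 S2 S3 S4 nx ny.
have [e1 [he1 E1]] := JL_bound HJ S1.
have [e2 [he2 E2]] := JL_bound HJ S2.
have [e3 [he3 E3]] := JL_bound HJ S3.
have [e4 [he4 E4]] := JL_bound HJ S4.
set N1 := vnorm2 (x + y) in E1; set N2 := vnorm2 (x - y) in E2.
set N3 := vnorm2 (x + 'i *: y) in E3; set N4 := vnorm2 (x - 'i *: y) in E4.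
have Hs := sum4_v x y; rewrite nx ny -/N1 -/N2 -/N3 -/N4 in Hs.
have key : 4 * (vinner (A *m x) (A *m y) - vinner x y) =
  (e1 * N1)%:C - (e2 * N2)%:C + 'i * ((e3 * N3)%:C - (e4 * N4)%:C).
  rewrite mulrBr !polar_v !scalemxAr -mulmxDr -!mulmxBr -mulmxDr E1 E2 E3 E4.
  rewrite -/N1 -/N2 -/N3 -/N4 !rCM !rCD rC1; ring.
have : cabs (4 * (vinner (A *m x) (A *m y) - vinner x y)) <= dl * N1 + dl * N2 + (dl * N3 + dl * N4).
  rewrite key; apply: le_trans (cabsD _ _) _; apply: lerD.
    by apply: le_trans (cabsB _ _) _; apply: lerD; apply: cabs_err => //; apply: vnorm2_ge0.
  rewrite cabsM cabs_i mul1r.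
  by apply: le_trans (cabsB _ _) _; apply: lerD; apply: cabs_err => //; apply: vnorm2_ge0.
rewrite cabsM cabs_nat -!mulrDr addrA Hs => H.
have : 4 * cabs (vinner (A *m x) (A *m y) - vinner x y) <= 4 * (2 * dl) by rewrite (le_trans H) //; lra.
by rewrite ler_pM2l.
Qed.

Lemma jl_diag p q (A : 'M[C]_(p, q)) dl (S : 'cV[C]_q -> Prop) x :
  is_JL dl A S -> S x -> vnorm2 x = 1 ->
  cabs (vinner (A *m x) (A *m x) - vinner x x) <= dl.
Proof.
move=> HJ Sx nx; have [e [he E]] := JL_bound HJ Sx.
rewrite !vinnerii E nx mulr1 -rCB (_ : 1 + e - 1 = e); last by ring.
rewrite cabs_real; exact: ltW.
Qed.

Lemma sf_norm2 d (n : 'I_d -> nat) r (y : forall l : 'I_d, 'I_r -> 'cV[C]_(n l)) l k :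
  standard_form y -> vnorm2 (y l k) = 1.
Proof.
move=> /(_ l k); rewrite /vnorm => H.
by rewrite -(sqr_sqrtr (vnorm2_ge0 (y l k))) H expr1n.
Qed.

Lemma pair_bound d (n : 'I_d -> nat) r (y : forall l : 'I_d, 'I_r -> 'cV[C]_(n l)) p
   j (Aj : 'M[C]_(p, n j)) dl (k h : 'I_r) :
  standard_form y -> is_JL dl Aj (Sprime (y j)) ->
  cabs (vinner (Aj *m y j k) (Aj *m y j h) - vinner (y j k) (y j h)) <= 2 * dl.
Proof.
move=> sf HJ; have n1 := sf_norm2 j _ sf.
case: (ltngtP h k) => hk.
- apply: (jl_pair HJ) => //; left; exists h, k; split => //; tauto.
- rewrite (vinnerC (Aj *m _)) (vinnerC (y j k)) -rmorphB cabsJ.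
  apply: (jl_pair HJ) => //; left; exists k, h; split => //; tauto.
- have -> : h = k by apply: val_inj.
  have H := jl_diag HJ (or_intror (ex_intro _ k erefl)) (n1 k).
  have : 0 <= dl by apply: le_trans (cabs_ge0 _) H.
  by move=> ?; apply: (le_trans H); lra.
Qed.

Lemma prod_pert (I : Type) (s : seq I) (a b : I -> C) (B : I -> R) t :
  0 <= t -> (forall j, 0 <= B j) -> (forall j, cabs (a j - b j) <= t) ->
  (forall j, cabs (b j) <= B j) ->
  cabs (\prod_(j <- s) a j - \prod_(j <- s) b j) <=
    \prod_(j <- s) (B j + t) - \prod_(j <- s) B j.
Proof.
move=> t0 B0 hab hb; elim: s => [|x s IH]; first by rewrite !big_nil !subrr cabs0.
rewrite !big_cons.
set P := \prod_(j <- s) a j in IH *; set Q := \prod_(j <- s) b j in IH *.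
set PB := \prod_(j <- s) (B j + t) in IH *; set QB := \prod_(j <- s) B j in IH *.
have -> : a x * P - b x * Q = a x * (P - Q) + (a x - b x) * Q by ring.
have hax : cabs (a x) <= B x + t.
  rewrite (_ : a x = b x + (a x - b x)); last by ring.
  by apply: le_trans (cabsD _ _) _; apply: lerD.
have hQ : cabs Q <= QB.
  rewrite /Q cabs_prod; apply: ler_prod => j _; rewrite cabs_ge0; exact: hb.
apply: le_trans (cabsD _ _) _; rewrite !cabsM.
have -> : (B x + t) * PB - B x * QB = (B x + t) * (PB - QB) + t * QB by ring.
apply: lerD; apply: ler_pM => //; try exact: cabs_ge0.
Qed.

Lemma mu_ge0 d (n : 'I_d -> nat) r (y : forall l : 'I_d, 'I_r -> 'cV[C]_(n l)) : 0 <= mu y.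
Proof. exact: bigmax_ge_id. Qed.

Lemma mu_bound d (n : 'I_d -> nat) r (y : forall l : 'I_d, 'I_r -> 'cV[C]_(n l)) l k h :
  h != k -> cabs (vinner (y l k) (y l h)) <= mu y.
Proof.
move=> hk; apply: (bigmax_sup l) => //; apply: (bigmax_sup k) => //.
exact: (@le_bigmax_cond _ _ _ 0 h (fun h0 => h0 != k) (fun h0 => cabs (vinner (y l k) (y l h0))) hk).
Qed.

Lemma mu'_ge0 d (n : 'I_d -> nat) r (y : forall l : 'I_d, 'I_r -> 'cV[C]_(n l)) : 0 <= mu' y.
Proof. exact: bigmax_ge_id. Qed.

Lemma mu'_bound d (n : 'I_d -> nat) r (y : forall l : 'I_d, 'I_r -> 'cV[C]_(n l)) k h :
  h != k -> \prod_(l < d) cabs (vinner (y l k) (y l h)) <= mu' y.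
Proof.
move=> hk; apply: (bigmax_sup k) => //.
exact: (@le_bigmax_cond _ _ _ 0 h (fun h0 => h0 != k) (fun h0 => \prod_(l < d) cabs (vinner (y l k) (y l h0))) hk).
Qed.

Lemma count_sum r (f g : 'I_r -> R) :
  \sum_(k < r) \sum_(h < r | h != k) (f k + g h) =
  (r%:R - 1) * (\sum_(k < r) f k + \sum_(k < r) g k).
Proof.
have E : forall k, \sum_(h < r | h != k) (f k + g h) =
    (r%:R * f k + \sum_(h < r) g h) - (f k + g k).
  move=> k.
  have H1 : \sum_(h < r) (f k + g h) = (f k + g k) + \sum_(h < r | h != k) (f k + g h).
    by rewrite (bigD1 k).
  have H2 : \sum_(h < r) (f k + g h) = r%:R * f k + \sum_(h < r) g h.
    by rewrite big_split /= sumr_const card_ord mulr_natl.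
  rewrite -H2 H1; ring.
under eq_bigr do rewrite E.
rewrite sumrB !big_split /= -mulr_sumr sumr_const card_ord -mulr_natl; ring.
Qed.

Lemma amgm (x y : R) : x * y <= (x ^+ 2 + y ^+ 2) / 2.
Proof.
have : 0 <= (x - y) ^+ 2 by apply: sqr_ge0.
by move=> H; rewrite ler_pdivlMr //; nra.
Qed.

Lemma term_bound (bk ah w : C) W : cabs w <= W ->
  cabs (bk * ah^* * w) <= (cabs bk ^+ 2 + cabs ah ^+ 2) / 2 * W.
Proof.
move=> hw; rewrite !cabsM cabsJ; apply: ler_pM => //.
- by rewrite mulr_ge0 // cabs_ge0.
- exact: cabs_ge0.
- exact: amgm.
Qed.

Lemma sum_bound r (b a : 'I_r -> C) (w : 'I_r -> 'I_r -> C) D c : 0 <= c ->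
  (forall k, cabs (w k k) <= D) -> (forall k h, h != k -> cabs (w k h) <= c) ->
  cabs (\sum_(k < r) \sum_(h < r) b k * (a h)^* * w k h) <=
    (D + (r%:R - 1) * c) / 2 * (cnorm2 b + cnorm2 a).
Proof.
move=> c0 hD hc.
apply: (le_trans (cabs_sum _ _ _)).
apply: (@le_trans _ _ (\sum_(k < r) ((cabs (b k) ^+ 2 + cabs (a k) ^+ 2) / 2 * D +
     \sum_(h < r | h != k) (cabs (b k) ^+ 2 + cabs (a h) ^+ 2) / 2 * c))).
  apply: ler_sum => k _; apply: (le_trans (cabs_sum _ _ _)).
  rewrite (bigD1 k) //=; apply: lerD; first exact: term_bound.
  by apply: ler_sum => h hk; apply: term_bound; apply: hc.
rewrite big_split /=.
have E1 : \sum_(i < r) (cabs (b i) ^+ 2 + cabs (a i) ^+ 2) / 2 * D = (cnorm2 b + cnorm2 a) / 2 * D.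
  by rewrite -mulr_suml -mulr_suml big_split.
have E2 : \sum_(i < r) \sum_(h < r | h != i) (cabs (b i) ^+ 2 + cabs (a h) ^+ 2) / 2 * c
   = (r%:R - 1) * (cnorm2 b + cnorm2 a) / 2 * c.
  rewrite /cnorm2 -(count_sum (fun k => cabs (b k) ^+ 2) (fun k => cabs (a k) ^+ 2)).
  under eq_bigr do rewrite -mulr_suml -mulr_suml.
  by rewrite -mulr_suml -mulr_suml.
rewrite E1 E2 le_eqVlt; apply/orP; left; apply/eqP; ring.
Qed.

Lemma pow_diff (x t : R) n : 0 <= x -> 0 <= t ->
  (x + t) ^+ n - x ^+ n <= n%:R * t * (x + t) ^+ n.-1.
Proof.
move=> x0 t0; case: n => [|n]; first by rewrite !expr0 subrr mul0r mul0r.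
elim: n => [|n IH]; first by rewrite !expr1 expr0 mulr1 mul1r; lra.
rewrite /= in IH *.
have xt0 : 0 <= x + t by lra.
have P0 : 0 <= (x + t) ^+ n by apply: exprn_ge0.
have Q0 : 0 <= x ^+ n by apply: exprn_ge0.
have QP : x ^+ n <= (x + t) ^+ n by apply: lerXn2r => //; rewrite ?nnegrE //; lra.
rewrite !exprS in IH *.
set P := (x + t) ^+ n in IH P0 QP *; set Q := x ^+ n in IH Q0 QP *.
have h1 := ler_wpM2l xt0 IH.
have h2 : t * (x * Q) <= t * ((x + t) * P).
  by apply: ler_wpM2l => //; apply: ler_pM => //; lra.
rewrite -[(n.+2)%:R]natr1 -[(n.+1)%:R]natr1 in h1 *.
nra.
Qed.

Lemma pow_exp (u : R) n : 0 <= u -> (1 + u) ^+ n <= expR (n%:R * u).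
Proof.
move=> u0; rewrite expRM_natl; apply: lerXn2r; rewrite ?nnegrE ?expR_ge0 //.
  lra.
exact: expR_ge1Dx.
Qed.

Lemma growth (x y : R) d : 0 <= x -> 0 <= y -> y <= x * (2 * d%:R)^-1 ->
  (x + y) ^+ d.-1 <= x ^+ d.-1 * expR 1.
Proof.
move=> x0 y0 hy; case: d hy => [|n] hy.
  rewrite /= !expr0 mul1r -[1 as X in X <= _]addr0 (le_trans _ (expR_ge1Dx _)) //.
  by rewrite lerD2l.
rewrite /=; set ud := (2 * n.+1%:R)^-1 in hy.
have ud0 : 0 <= ud by rewrite invr_ge0 mulr_ge0.
have hnud : n.+1%:R * ud <= 1.
  rewrite /ud invfM mulrCA mulfV ?pnatr_eq0 // mulr1.
  by rewrite invf_le1 ?ler1n // ltr0n.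
have h1 : x + y <= x * (1 + ud) by lra.
apply: (@le_trans _ _ ((x * (1 + ud)) ^+ n)).
  by apply: lerXn2r; rewrite ?nnegrE //; lra.
rewrite exprMn ler_wpM2l ?exprn_ge0 //.
apply: (@le_trans _ _ ((1 + ud) ^+ n.+1)).
  by rewrite exprS ler_peMl ?exprn_ge0 //; lra.
apply: (le_trans (pow_exp _ ud0)).
by rewrite ler_expR.
Qed.

Lemma sqrt_bound r : r%:R - 1 <= Num.sqrt ((r * (r - 1))%:R : R).
Proof.
case: r => [|r]; first by rewrite (le_trans _ (sqrtr_ge0 _)) // sub0r lerN10.
rewrite -addn1 natrD addrK addnK -(ger0_norm (ler0n _ r)) -sqrtr_sqr.
rewrite ler_sqrt ?ler0n // -natrX ler_nat expnSr mulnC leq_mul2r.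
by rewrite leq_addr orbT.
Qed.

Lemma tnorm_lb d (n : 'I_d -> nat) r (y : forall l : 'I_d, 'I_r -> 'cV[C]_(n l)) (b : 'I_r -> C) :
  standard_form y ->
  cnorm2 b * (1 - (r%:R - 1) * mu' y) <= re (tinner (cp b y) (cp b y)).
Proof.
move=> sf; rewrite tinner_cp.
pose w k h := if h == k then 0 else \prod_(j < d) vinner (y j k) (y j h).
have E : \sum_(k < r) \sum_(h < r) b k * (b h)^* * \prod_(j < d) vinner (y j k) (y j h)
   = \sum_(k < r) \sum_(h < r) b k * (b h)^* * w k h + (cnorm2 b)%:C.
  rewrite /cnorm2 rC_sum -big_split /=; apply: eq_bigr => k _.
  rewrite (bigD1 k) //= [in RHS](bigD1 k) //= /w eqxx mulr0 add0r addrC; congr (_ + _).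
    by apply: eq_bigr => h hk; rewrite (negbTE hk).
  rewrite big1 ?mulr1 -?mulJ // => j _.
  by rewrite vinnerii (sf_norm2 j k sf).
rewrite E re_add re_real.
have hb := @sum_bound r b b w 0 (mu' y) (mu'_ge0 y).
have : cabs (\sum_(k < r) \sum_(h < r) b k * (b h)^* * w k h) <=
    (0 + (r%:R - 1) * mu' y) / 2 * (cnorm2 b + cnorm2 b).
  apply: hb => [k|k h hk]; first by rewrite /w eqxx cabs0.
  by rewrite /w (negbTE hk) cabs_prod; apply: mu'_bound.
move: (re_ge (\sum_(k < r) \sum_(h < r) b k * (b h)^* * w k h)).
set W := re _; set cW := cabs _ => h1 h2.
have -> : cnorm2 b * (1 - (r%:R - 1) * mu' y) =
   cnorm2 b - (0 + (r%:R - 1) * mu' y) / 2 * (cnorm2 b + cnorm2 b) by field.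
lra.
Qed.
End S.
Unset Implicit Arguments.

Theorem corollary1 (R : realType) (d r : nat) (n m : 'I_d -> nat)
    (y : forall l : 'I_d, 'I_r -> 'cV[R[i]]_(n l)) (beta alpha : 'I_r -> R[i])
    (eps : R) (A : forall j : 'I_d, 'M[R[i]]_(m j, n j)) :
  standard_form y ->
  0 < eps <= 3 / 4 ->
  (forall j : 'I_d, is_JL (eps / (4 * d%:R)) (A j) (Sprime (y j))) ->
  let X := cp beta y in
  let Y := cp alpha y in
  let e' := eps' eps (mu y) d r in
  [/\ cabs (tinner (mprod X A) (mprod Y A) - tinner X Y)
        <= 2 * e' * (cnorm2 beta + cnorm2 alpha),
      2 * e' * (cnorm2 beta + cnorm2 alpha)
        <= 4 * e' * Num.max (cnorm2 beta) (cnorm2 alpha)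
    & (r%:R - 1) * mu' y < 1 ->
      4 * e' * Num.max (cnorm2 beta) (cnorm2 alpha)
        <= 4 * e' * Num.max (tnorm X ^+ 2) (tnorm Y ^+ 2) / (1 - (r%:R - 1) * mu' y)].
Proof.
move=> sf /andP [eps0 eps34] HJ X Y e'.
set dl := eps / (4 * d%:R).
set t := 2 * dl.
set ud := (2 * d%:R)^-1 : R.
set E := expR (1 : R).
set s := Num.sqrt ((r * (r - 1))%:R : R).
set mu0 := mu y.
set Mx := Num.max (eps ^+ (d - 1)) (mu0 ^+ (d - 1)).
have E1 : 1 <= E by rewrite /E (le_trans _ (expR_ge1Dx 1)) // lerDl.
have s0 : 0 <= s by apply: sqrtr_ge0.
have mu00 : 0 <= mu0 by apply: mu_ge0.
have Mx0 : 0 <= Mx by rewrite le_max exprn_ge0 //; lra.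
have hdud : d%:R * ud <= 2^-1.
  have [d0|dn0] := eqVneq (d%:R : R) 0; first by rewrite d0 mul0r invr_ge0; lra.
  by rewrite /ud invfM mulrCA mulfV // mulr1.
have ud0 : 0 <= ud by rewrite invr_ge0 mulr_ge0 // ler0n.
have ud1 : ud <= 1.
  have [d0|dn0] := eqVneq (d%:R : R) 0; first by rewrite /ud d0 mulr0 invr0; lra.
  have h1 : 1 <= d%:R :> R by rewrite ler1n lt0n -(@pnatr_eq0 R).
  have h2 : 1 <= 2 * d%:R :> R by lra.
  rewrite /ud invf_le1 //; lra.
have tE : t = eps * ud.
  have [d0|dn0] := eqVneq (d%:R : R) 0; first by rewrite /t /dl /ud d0 !mulr0 invr0 !mulr0.
  by rewrite /t /dl /ud; field; rewrite dn0.
have t0 : 0 <= t by rewrite tE mulr_ge0 //; lra.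
have e'0 : 0 <= e'.
  rewrite /e' /eps' -/E -/s -/mu0 -/Mx; case: eqP => _.
    by rewrite mulr_ge0 ?addr_ge0 ?mulr_ge0 ?exprn_ge0 //; lra.
  by rewrite mulr_ge0 ?addr_ge0 ?mulr_ge0 ?exprn_ge0 //; lra.
pose W k h := \prod_(j < d) vinner (A j *m y j k) (A j *m y j h) - \prod_(j < d) vinner (y j k) (y j h).
have EXY : tinner (mprod X A) (mprod Y A) - tinner X Y =
    \sum_(k < r) \sum_(h < r) beta k * (alpha h)^* * W k h.
  have -> : tinner (mprod X A) (mprod Y A) =
      tinner (cp beta (fun j k => A j *m y j k)) (cp alpha (fun j k => A j *m y j k)).
    by rewrite /tinner; apply: eq_bigr => i _; rewrite !mprod_cp.
  rewrite !tinner_cp -sumrB; apply: eq_bigr => k _; rewrite -sumrB.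
  by apply: eq_bigr => h _; rewrite mulrBr.
have hpair : forall j k h, cabs (vinner (A j *m y j k) (A j *m y j h) - vinner (y j k) (y j h)) <= t.
  by move=> j k h; apply: pair_bound.
set D := (1 + t) ^+ d - 1.
set c := (mu0 + t) ^+ d - mu0 ^+ d.
have hDk : forall k, cabs (W k k) <= D.
  move=> k; have := @prod_pert R 'I_d (index_enum 'I_d) (fun j => vinner (A j *m y j k) (A j *m y j k))
     (fun j => vinner (y j k) (y j k)) (fun _ => 1) t t0 (fun _ => ler01) (fun j => hpair j k k).
  rewrite !prodr_const card_ord expr1n; apply.
  by move=> j; rewrite vinnerii (sf_norm2 j k sf) cabs1.
have hCk : forall k h, h != k -> cabs (W k h) <= c.
  move=> k h hk; have := @prod_pert R 'I_d (index_enum 'I_d) (fun j => vinner (A j *m y j k) (A j *m y j h))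
     (fun j => vinner (y j k) (y j h)) (fun _ => mu0) t t0 (fun _ => mu00) (fun j => hpair j k h).
  rewrite !prodr_const card_ord; apply.
  by move=> j; apply: mu_bound.
have c0 : 0 <= c by rewrite subr_ge0 lerXn2r ?nnegrE //; lra.
have hsum := sum_bound beta alpha c0 hDk hCk.
have hdt : d%:R * t <= eps / 2.
  rewrite tE mulrCA; have : d%:R * ud * eps <= 2^-1 * eps by rewrite ler_wpM2r //; lra.
  by rewrite mulrC; lra.
have hD : D <= eps / 2 * E.
  rewrite /D -{2}(expr1n _ d); apply: (le_trans (@pow_diff R 1 t d ler01 t0)).
  have tud : t <= 1 * ud by rewrite mul1r tE ler_piMl //; lra.
  have g := @growth R 1 t d ler01 t0 tud.
  rewrite expr1n mul1r in g.
  apply: (@le_trans _ _ (d%:R * t * E)); first by rewrite ler_wpM2l // mulr_ge0 // ler0n.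
  by rewrite ler_wpM2r //; lra.
have hrc : (r%:R - 1) * c <= s * c by rewrite ler_wpM2r // sqrt_bound.
have key : D + (r%:R - 1) * c <= 4 * e'.
  rewrite /e' /eps' -/E -/s -/mu0 -/Mx; case: eqP => hmu.
  - have hc : c <= eps ^+ d.
      rewrite /c hmu add0r; apply: (@le_trans _ _ (t ^+ d)).
        by rewrite gerBl exprn_ge0.
      have te : t <= eps by rewrite tE ler_piMr //; lra.
      by apply: lerXn2r => //; rewrite nnegrE; lra.
    have h1 : s * c <= s * eps ^+ d by rewrite ler_wpM2l.
    have h2 : s * eps ^+ d <= E * E * (s * eps ^+ d).
      by rewrite ler_peMl ?mulr_ge0 ?exprn_ge0 //; try lra; rewrite mulr_ege1.
    have h3 : eps / 2 * E <= 4 * (eps * E) by rewrite mulrA ler_wpM2r ?(le_trans ler01) //; lra.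
    have -> : 4 * ((eps + E * s * eps ^+ d) * E) = 4 * (eps * E) + 4 * (E * E * (s * eps ^+ d)) by ring.
    have : 0 <= E * E * (s * eps ^+ d) by rewrite !mulr_ge0 ?exprn_ge0 //; lra.
    lra.
  - set M := Num.max eps mu0.
    have M0 : 0 <= M by rewrite le_max; apply/orP; left; lra.
    have hMx : M ^+ d.-1 <= Mx.
      rewrite /M /Mx -subn1; have [hm|hm] := leP eps mu0.
        by rewrite le_max lexx orbT.
      by rewrite le_max lexx.
    have hc : c <= eps / 2 * Mx * E.
      rewrite /c; apply: (le_trans (@pow_diff R mu0 t d mu00 t0)).
      have tM : t <= M * ud by rewrite tE ler_wpM2r // le_max lexx.
      have g := @growth R M t d M0 t0 tM.
      have g2 : (mu0 + t) ^+ d.-1 <= (M + t) ^+ d.-1.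
        by rewrite lerXn2r ?nnegrE // ?lerD2r ?le_max ?lexx ?orbT //; lra.
      have g3 : (mu0 + t) ^+ d.-1 <= Mx * E.
        apply: (le_trans g2); apply: (le_trans g); apply: ler_wpM2r; [exact: expR_ge0 | exact: hMx].
      apply: (@le_trans _ _ (d%:R * t * (Mx * E))); first by rewrite ler_wpM2l // mulr_ge0 // ler0n.
      rewrite mulrA ler_wpM2r //; first lra.
      by rewrite ler_wpM2r.
    have h1 : s * c <= s * (eps / 2 * Mx * E) by rewrite ler_wpM2l.
    have h2 : s * (eps / 2 * Mx * E) <= 4 * (eps * (E * E * s * Mx)).
      have : E <= E * E by rewrite ler_peMl //; lra.
      move=> hEE.
      have -> : s * (eps / 2 * Mx * E) = (eps * s * Mx) / 2 * E by ring.
      have -> : 4 * (eps * (E * E * s * Mx)) = 4 * (eps * s * Mx) * (E * E) by ring.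
      have hp : 0 <= eps * s * Mx by rewrite !mulr_ge0 //; lra.
      apply: ler_pM => //; try lra.
    have h3 : eps / 2 * E <= 4 * (eps * E) by rewrite mulrA ler_wpM2r ?(le_trans ler01) //; lra.
    have -> : 4 * (eps * (E + E ^+ 2 * s * Mx)) = 4 * (eps * E) + 4 * (eps * (E * E * s * Mx)) by ring.
    lra.
have N0 : 0 <= cnorm2 beta + cnorm2 alpha.
  by rewrite addr_ge0 // sumr_ge0 // => k _; rewrite sqr_ge0.
split.
- rewrite EXY; apply: (le_trans hsum); rewrite ler_wpM2r //; lra.
- have : cnorm2 beta + cnorm2 alpha <= 2 * Num.max (cnorm2 beta) (cnorm2 alpha).
    have h1 : cnorm2 beta <= Num.max (cnorm2 beta) (cnorm2 alpha) by rewrite le_max lexx.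
    have h2 : cnorm2 alpha <= Num.max (cnorm2 beta) (cnorm2 alpha) by rewrite le_max lexx orbT.
    lra.
  move=> h; rewrite (_ : 4 * e' * _ = 2 * e' * (2 * Num.max (cnorm2 beta) (cnorm2 alpha))); last by ring.
  by apply: ler_wpM2l => //; rewrite mulr_ge0.
- move=> hmu'.
  set den := 1 - (r%:R - 1) * mu' y.
  have den0 : 0 < den by rewrite /den; lra.
  have hX := tnorm_lb beta sf; have hY := tnorm_lb alpha sf.
  rewrite -/den -/X -/Y in hX hY.
  have nb0 : 0 <= cnorm2 beta by rewrite sumr_ge0 // => k _; rewrite sqr_ge0.
  have na0 : 0 <= cnorm2 alpha by rewrite sumr_ge0 // => k _; rewrite sqr_ge0.
  have tX : tnorm X ^+ 2 = re (tinner X X).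
    by rewrite /tnorm sqr_sqrtr // (le_trans _ hX) // mulr_ge0 //; lra.
  have tY : tnorm Y ^+ 2 = re (tinner Y Y).
    by rewrite /tnorm sqr_sqrtr // (le_trans _ hY) // mulr_ge0 //; lra.
  rewrite (_ : 4 * e' * Num.max (tnorm X ^+ 2) (tnorm Y ^+ 2) / den =
     4 * e' * (Num.max (tnorm X ^+ 2) (tnorm Y ^+ 2) / den)); last by rewrite mulrA.
  apply: ler_wpM2l; first by rewrite mulr_ge0 //; lra.
  rewrite ge_max; apply/andP; split; rewrite ler_pdivlMr //.
  + apply: (le_trans hX); rewrite -tX le_max lexx //.
  + apply: (le_trans hY); rewrite -tY le_max lexx orbT //.
Qed.
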